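(* Under Assumptions 1, 2 and 3, let $\lambda_1,\lambda_2>0$, let $(\hat S,\hat L)$ be as in the context and $\Delta L=L^*-\hat L$. Then, with probability at least $1-2e^{-\tilde\nu_n\gamma_n sn}$, $$\Big|\big\langle \Omega\odot(A-\hat S-\hat S^\top)_{|O}\,\big|\,\Delta L\big\rangle\Big|\le 16\,\tilde\nu_n\gamma_n\rho_n ns,$$ where $\langle M|N\rangle=\sum_{i,j}M_{ij}N_{ij}$.
   Context: Let $n\ge2$ and let $[n]=\mathcal I\sqcup\mathcal O$ be a partition into inliers $\mathcal I$ and outliers $\mathcal O$, $s=|\mathcal O|$. Write $I=\mathcal I\times\mathcal I$ and $O=([n]\times[n])\setminus I$. For $M\in\mathbb R^{n\times n}$ and $\mathcal S\subset[n]\times[n]$, $M_{|\mathcal S}=\mathbb 1_{\mathcal S}\odot M$ ($\odot$ entrywise product, $\mathbb 1_{\mathcal S}$ indicator matrix). Let $\rho_n\in(0,1/2]$, $\gamma_n\in(0,1]$, $k\ge1$. $L^*$ is a symmetric $n\times n$ matrix of rank $k$ with entries in $[0,\rho_n]$ and $L^*_{ij}=0$ whenever $i\in\mathcal O$ or $j\in\mathcal O$. $S^*$ is an $n\times n$ matrix with entries in $[0,\gamma_n]$, zero diagonal, $S^*_{\cdot,j}=0$ for all $j\in\mathcal I$, and $L^*+S^*+(S^* )^\top$ has entries in $[0,1]$. The adjacency matrix $A$ is symmetric with zero diagonal and $(A_{ij})_{i<j}$ are independent, $A_{ij}\sim\mathrm{Bernoulli}((L^*+S^*+(S^* )^\top)_{ij})$.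 The sampling matrix $\Omega$ is symmetric with zero diagonal, $(\Omega_{ij})_{i<j}$ are independent $\mathrm{Bernoulli}(\Pi_{ij})$, $\Omega$ independent of $A$, $\Pi=\mathbb E[\Omega]$. Norms: $\|M\|_{2,1}=\sum_j(\sum_iM_{ij}^2)^{1/2}$, $\|\cdot\|_F$ Frobenius, $\|\cdot\|_*$ nuclear. Assumption 1: there is $\mu_n>0$ with $\Pi_{ij}\ge\mu_n$ for all $(i,j)\in I$, $i\neq j$; and $\nu_n,\tilde\nu_n\in(0,1]$ satisfy $\sum_{j\in\mathcal I}\Pi_{ij}\le\nu_n n$ for all $i\in\mathcal I$ and $\sum_{j\in\mathcal O}\Pi_{ij}\le\tilde\nu_n s$ for all $i\in[n]$. Assumption 2: $\nu_n\rho_n\ge\log(n)/n$ and $\tilde\nu_n\gamma_n\ge\log(n)/n$. Assumption 3: $\nu_n\rho_n n\ge\tilde\nu_n\gamma_n s$. Estimator: for $\lambda_1,\lambda_2>0$, $\mathcal F(S,L)=\frac12\|\Omega\odot(A-L-S-S^\top)\|_F^2+\lambda_1\|L\|_*+\lambda_2\|S\|_{2,1}$; $(\hat S,\hat L)$ is any minimizer of $\mathcal F$ over $S\in[0,1]^{n\times n}$ and symmetric $L\in[0,\rho_n]^{n\times n}$, and (standing assumption that the upper box constraint on $S$ is inactive) $\hat S$ also minimizes $S\mapsto\mathcal F(S,\hat L)$ over nonnegative $S\in\mathbb R_+^{n\times n}$. *)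

(* Defs.v *)
From Stdlib Require Import Reals.
From Stdlib Require Import ClassicalEpsilon.
From mathcomp Require Import all_boot.
Set Implicit Arguments.
Unset Strict Implicit.
Unset Printing Implicit Defensive.

Local Open Scope R_scope.

Definition mat (n : nat) := 'I_n -> 'I_n -> R.

Notation "\rsum_ ( i : T ) F" := (\big[Rplus/R0]_(i : T) F)
  (at level 41, F at level 41, i, T at level 50).
Notation "\rsum_ ( i < n ) F" := (\big[Rplus/R0]_(i < n) F)
  (at level 41, F at level 41, i, n at level 50).
Notation "\rsum_ ( i 'in' A ) F" := (\big[Rplus/R0]_(i in A) F)
  (at level 41, F at level 41, i, A at level 50).

Definition transp n (M : mat n) : mat n := fun i j => M j i.
Definition symm_mat n (M : mat n) : Prop := forall i j, M i j = M j i.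

Definition frob_inner n (M N : mat n) : R :=
  \rsum_(i < n) \rsum_(j < n) (M i j * N i j).

Definition frob_sq n (M : mat n) : R := frob_inner M M.

Definition norm21 n (M : mat n) : R :=
  \rsum_(j < n) sqrt (\rsum_(i < n) (M i j * M i j)).

Definition orthogonal n (U : mat n) : Prop :=
  forall i j, \rsum_(k < n) (U k i * U k j) = (if i == j then 1 else 0).

Definition is_nuclear_norm n (M : mat n) (v : R) : Prop :=
  exists (U V : mat n) (sigma : 'I_n -> R),
    orthogonal U /\ orthogonal V /\ (forall r, 0 <= sigma r) /\
    (forall i j, M i j = \rsum_(r < n) (U i r * sigma r * V j r)) /\
    v = \rsum_(r < n) sigma r.

Definition nucnorm n (M : mat n) : R :=
  epsilon (inhabits 0) (is_nuclear_norm M).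

Definition rank_le n (M : mat n) (k : nat) : Prop :=
  exists (u v : nat -> 'I_n -> R),
    forall i j, M i j = \big[Rplus/R0]_(0 <= r < k) (u r i * v r j).
Definition has_rank n (M : mat n) (k : nat) : Prop :=
  rank_le M k /\ forall k' : nat, (k' < k)%N -> ~ rank_le M k'.

Definition hadamard n (M N : mat n) : mat n := fun i j => M i j * N i j.
Definition restrict n (Sset : 'I_n -> 'I_n -> bool) (M : mat n) : mat n :=
  fun i j => if Sset i j then M i j else 0.

Definition outl_pairs n (Inl : {set 'I_n}) : 'I_n -> 'I_n -> bool :=
  fun i j => ~~ ((i \in Inl) && (j \in Inl)).

(* An outcome records, for every ordered pair (i,j), the pair of bits
   (A_ij, Omega_ij); only pairs with i < j carry randomness, the other
   coordinates are forced to (false,false) by the weight below. *)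
Definition outcome (n : nat) := {ffun 'I_n * 'I_n -> bool * bool}.

Definition bern (p : R) (b : bool) : R := if b then p else 1 - p.

(* P = expected adjacency (L* + S* + S*^T), Pi = sampling probabilities.
   Weight of an outcome: independent Bernoulli(P_ij) for A_ij and
   independent Bernoulli(Pi_ij) for Omega_ij, i < j. *)
Definition weight n (P Pi : mat n) (w : outcome n) : R :=
  \big[Rmult/R1]_(ij : 'I_n * 'I_n)
     (if (ij.1 < ij.2)%N
      then bern (P ij.1 ij.2) (w ij).1 * bern (Pi ij.1 ij.2) (w ij).2
      else if w ij == (false, false) then 1 else 0).

Definition b2R (b : bool) : R := if b then 1 else 0.

Definition adj_of n (w : outcome n) : mat n := fun i j =>
  if (i < j)%N then b2R (w (i, j)).1
  else if (j < i)%N then b2R (w (j, i)).1 else 0.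
Definition samp_of n (w : outcome n) : mat n := fun i j =>
  if (i < j)%N then b2R (w (i, j)).2
  else if (j < i)%N then b2R (w (j, i)).2 else 0.

Definition indic (P : Prop) : R :=
  if excluded_middle_informative P then 1 else 0.

Definition prob n (P Pi : mat n) (E : outcome n -> Prop) : R :=
  \rsum_(w : outcome n) (weight P Pi w * indic (E w)).

Definition objF n (A Om : mat n) (lam1 lam2 : R) (S L : mat n) : R :=
  / 2 * frob_sq (hadamard Om (fun i j => A i j - L i j - S i j - S j i))
  + lam1 * nucnorm L + lam2 * norm21 S.

(* Main.v *)
From HB Require Import structures.
Require Import Defs.
From Stdlib Require Import Reals Lra.
From Stdlib Require Import ClassicalEpsilon.
From mathcomp Require Import all_boot.
Set Implicit Arguments.
Unset Strict Implicit.
Local Open Scope R_scope.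


Lemma RpA : associative Rplus. Proof. move=> x y z; ring. Qed.
Lemma RmA : associative Rmult. Proof. move=> x y z; ring. Qed.
Lemma Rplus_0_l' : left_id R0 Rplus. Proof. move=> x; ring. Qed.
HB.instance Definition _ := Monoid.isComLaw.Build R R0 Rplus RpA Rplus_comm Rplus_0_l'.
Lemma Rmult_1_l' : left_id R1 Rmult. Proof. move=> x; ring. Qed.
HB.instance Definition _ := Monoid.isComLaw.Build R R1 Rmult RmA Rmult_comm Rmult_1_l'.
Lemma Rm0l : left_zero R0 Rmult. Proof. move=> x; ring. Qed.
Lemma Rm0r : right_zero R0 Rmult. Proof. move=> x; ring. Qed.
HB.instance Definition _ := Monoid.isMulLaw.Build R R0 Rmult Rm0l Rm0r.
Lemma RDl : left_distributive Rmult Rplus. Proof. move=> x y z; ring. Qed.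
Lemma RDr : right_distributive Rmult Rplus. Proof. move=> x y z; ring. Qed.
HB.instance Definition _ := Monoid.isAddLaw.Build R Rmult Rplus RDl RDr.

Lemma sum_le (I : Type) (r : seq I) (P : pred I) (F G : I -> R) :
  (forall i, P i -> F i <= G i) ->
  \big[Rplus/R0]_(i <- r | P i) F i <= \big[Rplus/R0]_(i <- r | P i) G i.
Proof.
move=> H; apply: (big_ind2 (fun x y => x <= y)); first lra.
  by move=> *; lra.
exact: H.
Qed.

Lemma sum_ge0 (I : Type) (r : seq I) (P : pred I) (F : I -> R) :
  (forall i, P i -> 0 <= F i) -> 0 <= \big[Rplus/R0]_(i <- r | P i) F i.
Proof.
move=> H; apply: (big_ind (fun x => 0 <= x)); first lra.
  by move=> *; lra.
exact: H.
Qed.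

Lemma Rabs_sum (I : Type) (r : seq I) (P : pred I) (F : I -> R) :
  Rabs (\big[Rplus/R0]_(i <- r | P i) F i) <= \big[Rplus/R0]_(i <- r | P i) Rabs (F i).
Proof.
apply: (big_ind2 (fun x y => Rabs x <= y)).
- rewrite Rabs_R0; lra.
- move=> x1 x2 y1 y2 h1 h2; have := Rabs_triang x1 y1; lra.
- move=> i _; lra.
Qed.

Lemma prod_le (I : Type) (r : seq I) (P : pred I) (F G : I -> R) :
  (forall i, P i -> 0 <= F i <= G i) ->
  0 <= \big[Rmult/R1]_(i <- r | P i) F i <= \big[Rmult/R1]_(i <- r | P i) G i.
Proof.
move=> H; apply: (big_ind2 (fun x y => 0 <= x <= y)); first lra.
  move=> x1 x2 y1 y2 h1 h2; split; first by apply: Rmult_le_pos; lra.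
  apply: Rmult_le_compat; lra.
exact: H.
Qed.

Lemma exp_sum (I : Type) (r : seq I) (P : pred I) (F : I -> R) :
  exp (\big[Rplus/R0]_(i <- r | P i) F i) = \big[Rmult/R1]_(i <- r | P i) exp (F i).
Proof.
apply: (big_morph exp); first by move=> x y; exact: exp_plus.
exact: exp_0.
Qed.

Lemma exp_le x y : x <= y -> exp x <= exp y.
Proof. case=> [h|->]; [left; exact: exp_increasing | lra]. Qed.

Lemma sum_const_ord n x : \rsum_(i < n) x = INR n * x.
Proof.
rewrite big_const_ord; elim: n => [|n IH]; first by simpl; ring.
rewrite [iter _ _ _]/= IH S_INR; ring.
Qed.

Lemma sum_delta (I : finType) (j : I) (x : R) :
  \big[Rplus/R0]_(b : I) (if b == j then x else 0) = x.
Proof. by rewrite -big_mkcond big_pred1_eq. Qed.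

Lemma sum_bool2 (F : bool * bool -> R) :
  \big[Rplus/R0]_(b : bool * bool) F b =
  F (true, true) + F (true, false) + (F (false, true) + F (false, false)).
Proof.
have -> : \big[Rplus/R0]_(b : bool * bool) F b = \big[Rplus/R0]_(b : bool * bool) F (b.1, b.2).
  by apply: eq_bigr; case.
rewrite -(pair_bigA _ (fun x y => F (x, y))) big_bool /= !big_bool /=; ring.
Qed.

Definition swp n (p : 'I_n * 'I_n) : 'I_n * 'I_n := (p.2, p.1).
Lemma swp_inj n : injective (@swp n).
Proof. by case=> a b [c d] [-> ->]. Qed.

Lemma sum_swp n (F : 'I_n * 'I_n -> R) :
  \big[Rplus/R0]_(p : 'I_n * 'I_n) F (swp p) = \big[Rplus/R0]_(p : 'I_n * 'I_n) F p.
Proof. by rewrite [RHS](reindex_inj (@swp_inj n)). Qed.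

Lemma sumD (I : Type) (r : seq I) (P : pred I) (F G : I -> R) :
  \big[Rplus/R0]_(i <- r | P i) (F i + G i) =
  \big[Rplus/R0]_(i <- r | P i) F i + \big[Rplus/R0]_(i <- r | P i) G i.
Proof. exact: big_split. Qed.

Lemma sumZ (I : Type) (r : seq I) (P : pred I) (a : R) (F : I -> R) :
  \big[Rplus/R0]_(i <- r | P i) (a * F i) = a * \big[Rplus/R0]_(i <- r | P i) F i.
Proof. by rewrite big_distrr. Qed.


Lemma sum_delta2 n (i j : 'I_n) (d : R) :
  \rsum_(a < n) \rsum_(b < n) (if (a == i) && (b == j) then d else 0) = d.
Proof.
rewrite -[RHS](sum_delta i d); apply: eq_bigr => a _.
case: (a == i) => /=; first exact: sum_delta.
by rewrite big1.
Qed.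

Lemma kkt n (A Om L S : mat n) lam1 lam2 (hlam2 : 0 < lam2)
  (hA : symm_mat A) (hOm : symm_mat Om) (hL : symm_mat L)
  (hOm01 : forall i j, Om i j = 0 \/ Om i j = 1) (hOmd : forall i, Om i i = 0)
  (hS0 : forall i j, 0 <= S i j)
  (hmin : forall S' : mat n, (forall i j, 0 <= S' i j) ->
     objF A Om lam1 lam2 S L <= objF A Om lam1 lam2 S' L) :
  forall i j, Om i j = 1 -> 0 < S i j -> 0 <= A i j - L i j - S i j - S j i.
Proof.
move=> i j hO hS.
have hij : i != j by apply/eqP => E; move: hO; rewrite E hOmd; lra.
set R0' := A i j - L i j - S i j - S j i.
destruct (Rle_lt_dec 0 R0') as [|hR] => //; exfalso.
set e := Rmin (S i j) (- R0').
have he1 : 0 < e by apply: Rmin_glb_lt; lra.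
have he2 : e <= S i j by exact: Rmin_l.
have he3 : e <= - R0' by exact: Rmin_r.
set S' : mat n := fun a b => if (a == i) && (b == j) then S i j - e else S a b.
have hS' : forall a b, 0 <= S' a b.
  move=> a b; rewrite /S'; case: ifP => _; [lra | exact: hS0].
have key := hmin S' hS'.
set d := (R0' + e) * (R0' + e) - R0' * R0'.
have hfrob : frob_sq (hadamard Om (fun a b => A a b - L a b - S' a b - S' b a)) =
   frob_sq (hadamard Om (fun a b => A a b - L a b - S a b - S b a)) + d + d.
  rewrite /frob_sq /frob_inner.
  have E1 := sum_delta2 i j d; have E2 := sum_delta2 j i d.
  set D1 := \rsum_(a < n) _ in E1; set D2 := \rsum_(a < n) _ in E2.
  rewrite -{1}E1 -E2 /D1 /D2 -!big_split /=.
  apply: eq_bigr => a _; rewrite -!big_split /=; apply: eq_bigr => b _.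
  rewrite /hadamard /S'.
  have hji : j != i by rewrite eq_sym.
  case: (eqVneq a i) => [->|ai]; case: (eqVneq b j) => [->|bj] /=.
  - rewrite ?(negbTE hji) ?(negbTE hij) ?eqxx /= ?andbF hO /d /R0'; ring.
  - rewrite ?(negbTE bj) ?(negbTE hij) /= ?andbF; ring.
  - rewrite ?(negbTE ai) ?(negbTE hji) /= ?andbF; ring.
  - rewrite ?(negbTE ai) ?(negbTE bj) /=.
    case: (eqVneq a j) => [->|aj]; case: (eqVneq b i) => [->|bi] /=; try ring.
    rewrite hOm hO hA hL /d /R0'; ring.
rewrite /objF hfrob in key.
have hnorm : norm21 S' <= norm21 S.
  apply: sum_le => b _; apply: sqrt_le_1_alt; apply: sum_le => a _.
  rewrite /S'; case: ifP => [/andP[/eqP-> /eqP->]|_]; last lra.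
  apply: Rmult_le_compat; lra.
move: key; rewrite /objF.
have : d < 0 by rewrite /d; nra.
nra.
Qed.


Lemma term_bound n (A Om L S Ls : mat n) lam1 lam2 rho (hlam2 : 0 < lam2)
  (hA : symm_mat A) (hOm : symm_mat Om) (hL : symm_mat L)
  (hOm01 : forall i j, Om i j = 0 \/ Om i j = 1) (hOmd : forall i, Om i i = 0)
  (hS0 : forall i j, 0 <= S i j)
  (hmin : forall S' : mat n, (forall i j, 0 <= S' i j) ->
     objF A Om lam1 lam2 S L <= objF A Om lam1 lam2 S' L)
  (hA0 : forall i j, 0 <= A i j)
  (hLb : forall i j, 0 <= L i j <= rho) (hLsb : forall i j, 0 <= Ls i j <= rho) a b :
  Rabs (Om a b * (A a b - S a b - S b a) * (Ls a b - L a b)) <= rho * (Om a b * A a b).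
Proof.
have K := kkt hlam2 hA hOm hL hOm01 hOmd hS0 hmin.
case: (hOm01 a b) => hO.
  rewrite hO !Rmult_0_l Rabs_R0; lra.
have hb : 0 <= A a b - S a b - S b a <= A a b.
  have := hS0 a b; have := hS0 b a; have := hLb a b.
  destruct (Rlt_le_dec 0 (S a b)) as [p|p].
    have := K a b hO p; lra.
  destruct (Rlt_le_dec 0 (S b a)) as [q|q].
    have hO' : Om b a = 1 by rewrite hOm.
    have := K b a hO' q; rewrite (hA b a) (hL b a); lra.
  have := hA0 a b; lra.
rewrite hO Rmult_1_l Rabs_mult Rmult_1_l.
have h1 : Rabs (A a b - S a b - S b a) <= A a b by rewrite Rabs_right; lra.
have h2 : Rabs (Ls a b - L a b) <= rho.
  have := hLb a b; have := hLsb a b => ??; apply: Rabs_le; lra.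
have := Rabs_pos (Ls a b - L a b).
have := Rabs_pos (A a b - S a b - S b a).
nra.
Qed.


Lemma adj_symm n (w : outcome n) : symm_mat (adj_of w).
Proof. by move=> i j; rewrite /adj_of; case: (ltngtP i j). Qed.
Lemma samp_symm n (w : outcome n) : symm_mat (samp_of w).
Proof. by move=> i j; rewrite /samp_of; case: (ltngtP i j). Qed.
Lemma b2R01 b : b2R b = 0 \/ b2R b = 1.
Proof. by case: b; [right|left]. Qed.
Lemma samp01 n (w : outcome n) i j : samp_of w i j = 0 \/ samp_of w i j = 1.
Proof. rewrite /samp_of; case: ifP => _; [|case: ifP => _]; try exact: b2R01; by left. Qed.
Lemma samp_diag n (w : outcome n) i : samp_of w i i = 0.
Proof. by rewrite /samp_of ltnn. Qed.
Lemma adj0 n (w : outcome n) i j : 0 <= adj_of w i j.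
Proof.
have hb : forall b, 0 <= b2R b by case; rewrite /b2R; lra.
rewrite /adj_of; case: ifP => _; [|case: ifP => _]; try lra; exact: hb.
Qed.

Definition xg n (Inl : {set 'I_n}) (p : 'I_n * 'I_n) (b : bool * bool) : R :=
  if (p.1 < p.2)%N then (if outl_pairs Inl p.1 p.2 then b2R b.1 * b2R b.2 else 0) else 0.
Definition Xr n (Inl : {set 'I_n}) (w : outcome n) : R :=
  \big[Rplus/R0]_(p : 'I_n * 'I_n) xg Inl p (w p).

Lemma Y_eq n (Inl : {set 'I_n}) (w : outcome n) :
  \rsum_(a < n) \rsum_(b < n)
     (if outl_pairs Inl a b then samp_of w a b * adj_of w a b else 0) = 2 * Xr Inl w.
Proof.
rewrite pair_bigA.
rewrite (eq_bigr (fun p => xg Inl p (w p) + xg Inl (swp p) (w (swp p)))).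
  rewrite big_split (sum_swp (fun p => xg Inl p (w p))) /Xr.
  have E : forall x y : R, x = y -> x + y = 2 * y by move=> x y ->; ring.
  by apply: E.
case=> a b _ /=; rewrite /xg /swp /samp_of /adj_of /=.
have -> : outl_pairs Inl b a = outl_pairs Inl a b by rewrite /outl_pairs andbC.
case: (ltngtP a b) => h; case: (outl_pairs Inl a b); ring.
Qed.

Lemma sum_ffun n (F : 'I_n * 'I_n -> bool * bool -> R) :
  \big[Rplus/R0]_(w : outcome n) \big[Rmult/R1]_(p : 'I_n * 'I_n) F p (w p) =
  \big[Rmult/R1]_(p : 'I_n * 'I_n) \big[Rplus/R0]_(b : bool * bool) F p b.
Proof. by rewrite bigA_distr_bigA. Qed.

Definition wf n (P Pi : mat n) (ij : 'I_n * 'I_n) (b : bool * bool) : R :=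
  if (ij.1 < ij.2)%N
  then bern (P ij.1 ij.2) b.1 * bern (Pi ij.1 ij.2) b.2
  else if b == (false, false) then 1 else 0.

Lemma weightE n (P Pi : mat n) w :
  weight P Pi w = \big[Rmult/R1]_(p : 'I_n * 'I_n) wf P Pi p (w p).
Proof. by []. Qed.

Lemma wf_ge0 n (P Pi : mat n) (hP : forall i j, 0 <= P i j <= 1)
  (hPi : forall i j, 0 <= Pi i j <= 1) p b : 0 <= wf P Pi p b.
Proof.
rewrite /wf /bern; case: ifP => _.
  have := hP p.1 p.2; have := hPi p.1 p.2.
  case: b.1; case: b.2 => ??; apply: Rmult_le_pos; lra.
case: ifP => _; lra.
Qed.

Lemma weight_ge0 n (P Pi : mat n) (hP : forall i j, 0 <= P i j <= 1)
  (hPi : forall i j, 0 <= Pi i j <= 1) w : 0 <= weight P Pi w.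
Proof.
rewrite weightE; apply: (big_ind (fun x => 0 <= x)); first lra.
  by move=> *; apply: Rmult_le_pos.
by move=> *; apply: wf_ge0.
Qed.

Lemma weight_sum n (P Pi : mat n) :
  \big[Rplus/R0]_(w : outcome n) weight P Pi w = 1.
Proof.
rewrite (eq_bigr _ (fun (w : outcome n) _ => weightE P Pi w)).
rewrite sum_ffun big1 // => p _.
rewrite sum_bool2 /wf /bern /=; case: ifP => _; ring.
Qed.

Definition hh n (Inl : {set 'I_n}) (P Pi : mat n) (p : 'I_n * 'I_n) : R :=
  if (p.1 < p.2)%N then (if outl_pairs Inl p.1 p.2 then 2 * P p.1 p.2 * Pi p.1 p.2 else 0) else 0.

Lemma mgf n (Inl : {set 'I_n}) (P Pi : mat n) (hP : forall i j, 0 <= P i j <= 1)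
  (hPi : forall i j, 0 <= Pi i j <= 1) :
  \big[Rplus/R0]_(w : outcome n) (weight P Pi w * exp (Xr Inl w)) <=
  exp (\big[Rplus/R0]_(p : 'I_n * 'I_n) hh Inl P Pi p).
Proof.
rewrite (eq_bigr (fun w : outcome n => \big[Rmult/R1]_(p : 'I_n * 'I_n)
            (wf P Pi p (w p) * exp (xg Inl p (w p))))); last first.
  by move=> w _; rewrite weightE /Xr exp_sum -big_split.
rewrite (sum_ffun (fun p b => wf P Pi p b * exp (xg Inl p b))) exp_sum.
refine (proj2 (prod_le _ _)) => p _.
rewrite sum_bool2 /wf /xg /hh /bern /=.
have := hP p.1 p.2; have := hPi p.1 p.2; move=> h1 h2.
case: ifP => _; last by rewrite /= !exp_0; lra.
case: ifP => _; last first.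
  rewrite exp_0; split; first by nra.
  nra.
rewrite /b2R !Rmult_1_l !Rmult_0_l exp_0.
have e3 := exp_le_3.
have ee := exp_ineq1_le (2 * P p.1 p.2 * Pi p.1 p.2).
have := Rmult_le_pos _ _ (proj1 h1) (proj1 h2).
have ep := exp_pos 1.
set x := P p.1 p.2 * Pi p.1 p.2 => hx.
have -> : P p.1 p.2 * Pi p.1 p.2 * exp 1 + P p.1 p.2 * (1 - Pi p.1 p.2) * 1 +
   ((1 - P p.1 p.2) * Pi p.1 p.2 * 1 + (1 - P p.1 p.2) * (1 - Pi p.1 p.2) * 1)
   = 1 + x * (exp 1 - 1) by rewrite /x; ring.
have -> : 2 * P p.1 p.2 * Pi p.1 p.2 = 2 * x by rewrite /x; ring.
rewrite -/x in ee *.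
have hx2 : 0 <= x by rewrite /x; nra.
have ee2 := exp_ineq1_le (2 * x).
have e1 := exp_ineq1_le 1.
split; nra.
Qed.


Unset Implicit Arguments.

Theorem mainTheorem11
  (n : nat) (hn : (2 <= n)%N)
  (Inl : {set 'I_n})                       (* inliers; outliers = ~: Inl *)
  (rho gam : R) (hrho : 0 < rho <= / 2) (hgam : 0 < gam <= 1)
  (k : nat) (hk : (1 <= k)%N)
  (Lstar Sstar Pi : mat n)
  (* L* : symmetric, rank k, entries in [0,rho], zero on outlier rows/cols *)
  (hLsym : symm_mat Lstar) (hLrank : has_rank Lstar k)
  (hLbox : forall i j, 0 <= Lstar i j <= rho)
  (hLout : forall i j, i \notin Inl \/ j \notin Inl -> Lstar i j = 0)
  (* S* : entries in [0,gam], zero diagonal, zero columns at inliers *)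
  (hSbox : forall i j, 0 <= Sstar i j <= gam)
  (hSdiag : forall i, Sstar i i = 0)
  (hScol : forall i j, j \in Inl -> Sstar i j = 0)
  (hPbox : forall i j, 0 <= Lstar i j + Sstar i j + Sstar j i <= 1)
  (* sampling probabilities Pi = E[Omega]: symmetric, zero diagonal *)
  (hPisym : symm_mat Pi) (hPidiag : forall i, Pi i i = 0)
  (hPibox : forall i j, 0 <= Pi i j <= 1)
  (nu nut : R) (hnu : 0 < nu <= 1) (hnut : 0 < nut <= 1)
  (* Assumption 1 *)
  (hA1mu : exists mu : R, 0 < mu /\
      forall i j, i \in Inl -> j \in Inl -> i <> j -> mu <= Pi i j)
  (hA1nu : forall i, i \in Inl -> \rsum_(j in Inl) Pi i j <= nu * INR n)
  (hA1nut : forall i, \rsum_(j in ~: Inl) Pi i j <= nut * INR #|~: Inl|)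
  (* Assumption 2 *)
  (hA2a : ln (INR n) / INR n <= nu * rho)
  (hA2b : ln (INR n) / INR n <= nut * gam)
  (* Assumption 3 *)
  (hA3 : nut * gam * INR #|~: Inl| <= nu * rho * INR n)
  (lam1 lam2 : R) (hlam1 : 0 < lam1) (hlam2 : 0 < lam2)
  (* the estimator, as a (any) function of the outcome (A, Omega) *)
  (Shat Lhat : outcome n -> mat n)
  (hSbox' : forall w i j, 0 <= Shat w i j <= 1)
  (hLsym' : forall w, symm_mat (Lhat w))
  (hLbox' : forall w i j, 0 <= Lhat w i j <= rho)
  (hmin : forall w (S L : mat n),
      (forall i j, 0 <= S i j <= 1) -> symm_mat L ->
      (forall i j, 0 <= L i j <= rho) ->
      objF (adj_of w) (samp_of w) lam1 lam2 (Shat w) (Lhat w)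
        <= objF (adj_of w) (samp_of w) lam1 lam2 S L)
  (hminS : forall w (S : mat n), (forall i j, 0 <= S i j) ->
      objF (adj_of w) (samp_of w) lam1 lam2 (Shat w) (Lhat w)
        <= objF (adj_of w) (samp_of w) lam1 lam2 S (Lhat w)) :
  1 - 2 * exp (- (nut * gam * INR #|~: Inl| * INR n))
  <= prob (fun i j => Lstar i j + Sstar i j + Sstar j i) Pi
       (fun w =>
          Rabs (frob_inner
                  (hadamard (samp_of w)
                     (restrict (outl_pairs Inl)
                        (fun i j => adj_of w i j - Shat w i j - Shat w j i)))
                  (fun i j => Lstar i j - Lhat w i j))
          <= 16 * nut * gam * rho * INR n * INR #|~: Inl|).
Proof.
set s := INR #|~: Inl|; set N := INR n.
set c := nut * gam * s * N.
set P := fun i j => Lstar i j + Sstar i j + Sstar j i.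
have hs0 : 0 <= s by apply: pos_INR.
have hN0 : 0 <= N by apply: pos_INR.
have hc0 : 0 <= c by rewrite /c; apply: Rmult_le_pos; [apply: Rmult_le_pos|]; try apply: Rmult_le_pos; lra.
have hF : \big[Rplus/R0]_(p : 'I_n * 'I_n) (Sstar p.1 p.2 * Pi p.1 p.2) <= c.
  rewrite -(pair_bigA _ (fun a b => Sstar a b * Pi a b)).
  apply: (Rle_trans _ (\rsum_(a < n) (gam * (nut * s)))); last first.
    rewrite sum_const_ord /c /N; lra.
  apply: sum_le => a _.
  apply: (Rle_trans _ (\rsum_(b < n) (if b \in ~: Inl then gam * Pi a b else 0))).
    apply: sum_le => b _; case: ifP => hb.
      have := hSbox a b; have := hPibox a b => ??; apply: Rmult_le_compat_r; lra.
    rewrite hScol; first lra.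
    by move: hb; rewrite in_setC => /negbFE.
  rewrite -big_mkcond -big_distrr /=.
  apply: Rmult_le_compat_l; first lra.
  exact: hA1nut.
have hH : \big[Rplus/R0]_(p : 'I_n * 'I_n) hh Inl P Pi p <= 4 * c.
  set F := fun p : 'I_n * 'I_n => Sstar p.1 p.2 * Pi p.1 p.2.
  have hF0 : forall p, 0 <= F p.
    by move=> p; rewrite /F; have := hSbox p.1 p.2; have := hPibox p.1 p.2 => ??; nra.
  apply: (Rle_trans _ (\big[Rplus/R0]_(p : 'I_n * 'I_n) (2 * F p + 2 * F (swp p)))).
    apply: sum_le => p _; rewrite /hh.
    have := hF0 p; have := hF0 (swp p) => ??.
    case: ifP => _; last lra.
    case: ifP => hO; last lra.
    have hL0 : Lstar p.1 p.2 = 0.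
      apply: hLout; move: hO; rewrite /outl_pairs negb_and.
      by case/orP => ->; [left|right].
    rewrite /P /F /swp /= hL0 (hPisym p.2 p.1).
    have key : forall a b q q', q = q' -> 2*(0+a+b)*q <= 2*(a*q) + 2*(b*q').
      by move=> a b q q' ->; right; ring.
    by apply: key.
  rewrite sumD !sumZ (sum_swp F).
  have key2 : forall x y, x <= c -> y = x -> 2*x + 2*y <= 4*c by move=> x y h ->; lra.
  by apply: key2.
have hdet : forall w, Rabs (frob_inner
                  (hadamard (samp_of w)
                     (restrict (outl_pairs Inl)
                        (fun i j => adj_of w i j - Shat w i j - Shat w j i)))
                  (fun i j => Lstar i j - Lhat w i j)) <= rho * (2 * Xr Inl w).
  move=> w; rewrite -Y_eq /frob_inner.
  apply: Rle_trans (Rabs_sum _ _ _) _.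
  rewrite -sumZ; apply: sum_le => a _.
  apply: Rle_trans (Rabs_sum _ _ _) _.
  rewrite -sumZ; apply: sum_le => b _.
  rewrite /hadamard /restrict; case: ifP => hO.
    have hS0 : forall i j, 0 <= Shat w i j by move=> i j; case: (hSbox' w i j).
    exact: (term_bound hlam2 (@adj_symm n w) (@samp_symm n w) (hLsym' w)
              (@samp01 n w) (@samp_diag n w) hS0 (hminS w) (@adj0 n w) (hLbox' w) hLbox).
  rewrite Rmult_0_r Rmult_0_l Rabs_R0 Rmult_0_r; lra.
have hP : forall i j, 0 <= P i j <= 1 := hPbox.
set B := 16 * nut * gam * rho * N * s.
have hB : B = rho * (16 * c) by rewrite /B /c; ring.
rewrite /prob.
have hind : forall w (Q : Prop), (Xr Inl w <= 8 * c -> Q) ->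
    1 - exp (Xr Inl w) * exp (- (8 * c)) <= indic Q.
  move=> w Q hQ; rewrite /indic; case: excluded_middle_informative => h.
    have := Rmult_lt_0_compat _ _ (exp_pos (Xr Inl w)) (exp_pos (- (8 * c))); rewrite /=; lra.
  destruct (Rle_lt_dec (Xr Inl w) (8 * c)) as [h1|h1].
    by rewrite /=; exfalso; apply: h; apply: hQ.
  rewrite -exp_plus.
  have : exp 0 <= exp (Xr Inl w + - (8 * c)) by apply: exp_le; lra.
  rewrite exp_0 /=; lra.
apply: (Rle_trans _ (\rsum_(w : outcome n) (weight P Pi w + (- exp (- (8 * c))) * (weight P Pi w * exp (Xr Inl w))))); last first.
  apply: sum_le => w _.
  have := weight_ge0 hP hPibox w => ?.
  have : 1 - exp (Xr Inl w) * exp (- (8 * c)) <= indic (Rabs (frob_inner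
                  (hadamard (samp_of w)
                     (restrict (outl_pairs Inl)
                        (fun i j => adj_of w i j - Shat w i j - Shat w j i)))
                  (fun i j => Lstar i j - Lhat w i j)) <= B).
    apply: hind => h1.
    apply: Rle_trans (hdet w) _; rewrite hB; apply: Rmult_le_compat_l; lra.
  nra.
rewrite sumD sumZ weight_sum.
have hm := mgf Inl hP hPibox.
have h4 : exp (\big[Rplus/R0]_(p : 'I_n * 'I_n) hh Inl P Pi p) <= exp (4 * c) by apply: exp_le.
have h8 := exp_pos (- (8 * c)).
have h48 : exp (- (8 * c)) * exp (4 * c) = exp (- (4 * c)) by rewrite -exp_plus; congr exp; ring.
have h41 : exp (- (4 * c)) <= exp (- c) by apply: exp_le; lra.
have hc1 := exp_pos (- c).
have : exp (- (8 * c)) * (\rsum_(w : outcome n) (weight P Pi w * exp (Xr Inl w))) <= exp (- (8 * c)) * exp (4 * c).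
  apply: Rmult_le_compat_l; lra.
have key : forall x y : R, y = x -> exp (- (8 * c)) * x <= exp (- (8 * c)) * exp (4 * c) ->
   1 - 2 * exp (- c) <= 1 + - exp (- (8 * c)) * y by move=> x y -> ?; lra.
move=> hx; apply: key hx; reflexivity.
Qed.
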